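(* Let $\mathcal{M}=(C,\mathcal{A})$ be a circular-arc model, where $C$ is a circle and $\mathcal{A}=\{A_1=(s_1,t_1),\dots,A_n=(s_n,t_n)\}$ is a family of open arcs of $C$ (arc $(s_i,t_i)$ runs clockwise from $s_i$ to $t_i$), and let $G$ be its intersection graph with vertex $v_i$ corresponding to $A_i$. Assume that no set of at most three arcs of $\mathcal{A}$ has union equal to $C$. Let $p\in C$ be a point with $\max_{q\in C}|\mathcal{A}(q)| = |\mathcal{A}(p)| = 3$, and index the arcs so that $\mathcal{A}(p)=\{A_1,A_2,A_3\}$. Choose $\epsilon>0$ so small that no endpoint of any arc lies in $[p-\epsilon,p+\epsilon]$, and form the interval model obtained by replacing each $A_i$, $i\in\{1,2,3\}$, by the two arcs $(s_i,p-\epsilon)$ and $(p+\epsilon,t_i)$ (all other arcs unchanged). Let $G_p$ be its intersection graph, where $u_i$ ($1\le i\le 3$) corresponds to $(s_i,p-\epsilon)$, $u_{n+i}$ ($1\le i\le 3$) corresponds to $(p+\epsilon,t_i)$, and $u_k$ ($4\le k\le n$) corresponds to $A_k$. Then $\{u_1,u_2,u_3\}$ and $\{u_{n+1},u_{n+2},u_{n+3}\}$ are triangles of $G_p$ that have no common vertex and no edge of $G_p$ joins a vertex of one to a vertex of the other.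
   Context: For a point $q\in C$, $\mathcal{A}(q)$ denotes the set of arcs of $\mathcal{A}$ containing $q$. *)

(* Defs.v *)
(* The circle C is modelled as R/Z, points represented by
   reals in [0,1); clockwise = increasing parameter. *)
From mathcomp Require Import all_boot all_order all_algebra.
From mathcomp Require Import reals.
Set Implicit Arguments. Unset Strict Implicit. Unset Printing Implicit Defensive.
Import Order.TTheory GRing.Theory Num.Theory.
Local Open Scope ring_scope.

Section CA.
Variable R : realType.

Definition pt (x : R) : R := x - (Num.floor x)%:~R.

Definition on_circle (x : R) : Prop := 0 <= x /\ x < 1.

Definition in_arc (a : R * R) (q : R) : bool :=
  let: (s, t) := a in
  if s < t then (s < q) && (q < t) else (s < q) || (q < t).

Definition in_closed_nbhd (p eps q : R) : Prop :=
  exists d : R, `|d| <= eps /\ q = pt (p + d).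

Definition ply (n : nat) (A : nat -> R * R) (q : R) : nat :=
  count (fun i => in_arc (A i) q) (iota 0 n).

(* Model obtained by splitting arcs 0,1,2 at p (0-based indices):
   index k < 3      : (s_k, p - eps)   (u_{k+1} in the paper)
   index 3 <= k < n : A_k unchanged
   index n + i, i<3 : (p + eps, t_i)   (u_{n+i+1} in the paper) *)
Definition split_model (n : nat) (A : nat -> R * R) (p eps : R) (k : nat)
  : R * R :=
  if (k < 3)%N then ((A k).1, pt (p - eps))
  else if (k < n)%N then A k
  else (pt (p + eps), (A (k - n)%N).2).

Definition ig_vertex (m : nat) (k : nat) : Prop := (k < m)%N.
Definition ig_edge (m : nat) (B : nat -> R * R) (k l : nat) : Prop :=
  (k < m)%N /\ (l < m)%N /\ k <> l /\
  exists q, on_circle q /\ in_arc (B k) q /\ in_arc (B l) q.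

Definition is_triangle (m : nat) (B : nat -> R * R) (x y z : nat) : Prop :=
  ig_edge m B x y /\ ig_edge m B y z /\ ig_edge m B x z.

End CA.

(* Main.v *)
Require Import Defs.
From mathcomp Require Import all_boot all_order all_algebra.
From mathcomp Require Import reals lra.
Import Order.TTheory GRing.Theory Num.Theory.
Local Open Scope ring_scope.

Section S.
Context {R : realType}.
Implicit Types x y : R.

Lemma pt0 y : 0 <= y -> y < 1 -> pt y = y.
Proof. move=> h1 h2; rewrite /pt (@Num.Theory.floor_def _ _ 0) ?subr0 //= h1 /=; by rewrite -[(0+1)%:~R]/(1%:~R) . Qed.
Lemma ptm y : -1 <= y -> y < 0 -> pt y = y + 1.
Proof. move=> h1 h2; rewrite /pt (@Num.Theory.floor_def _ _ (-1)). by rewrite opprK. 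
 rewrite addNr /= (_ : (-1)%:~R = -1 :> R) ?h1 //=. Qed.
Lemma ptp y : 1 <= y -> y < 2 -> pt y = y - 1.
Proof. move=> h1 h2; rewrite /pt (@Num.Theory.floor_def _ _ 1) //= h1 /=. by rewrite -[(1+1)%:~R]/(2%:~R). Qed.
Lemma rE (p x : R) : on_circle p -> on_circle x -> pt (x - p) = if p <= x then x - p else x - p + 1.
Proof. case=> ? ? [? ?]; case: leP => h; [rewrite pt0 | rewrite ptm]; lra. Qed.

Ltac cmp := repeat match goal with |- context [?x < ?y] =>
  case: (ltP x y) => ? end.

Lemma ptc y : on_circle (pt y).
Proof.
rewrite /pt; have h1 := Num.Theory.floor_le y; have h2 := Num.Theory.floorD1_gt y.
move: h2; rewrite intrD /=; split; lra.
Qed.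

Lemma rinv (p c : R) : on_circle p -> on_circle c -> pt (pt (c + p) - p) = c.
Proof.
move=> [? ?] [? ?]; case: (ltP (c + p) 1) => h.
  rewrite (@pt0 (c + p)); try lra. rewrite pt0; lra.
rewrite (@ptp (c + p)); try lra. rewrite ptm; lra.
Qed.

Lemma rm (p d : R) : on_circle p -> 0 < d < 1 -> pt (pt (p - d) - p) = 1 - d.
Proof.
move=> [? ?] /andP[? ?]; case: (leP d p) => h.
  rewrite (@pt0 (p - d)); try lra. rewrite ptm; lra.
rewrite (@ptm (p - d)); try lra. rewrite pt0; lra.
Qed.

Lemma rp (p d : R) : on_circle p -> 0 < d < 1 -> pt (pt (p + d) - p) = d.
Proof.
move=> [? ?] /andP[? ?]; case: (ltP (p + d) 1) => h.
  rewrite (@pt0 (p + d)); try lra. rewrite pt0; lra.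
rewrite (@ptp (p + d)); try lra. rewrite ptm; lra.
Qed.

Lemma endp (p eps x : R) : on_circle p -> on_circle x -> ~ in_closed_nbhd p eps x ->
  eps < pt (x - p) /\ pt (x - p) < 1 - eps.
Proof.
move=> hp hx hn; have hx' := hx; have hp' := hp; move: hp' hx' => [? ?] [? ?].
rewrite rE //; case: (leP p x) => h; split; rewrite ltNge; apply/negP => h'; apply: hn.
- exists (x - p); split; first by rewrite ler_norml; apply/andP; split; lra.
  rewrite pt0; lra.
- exists (x - p - 1); split; first by rewrite ler_norml; apply/andP; split; lra.
  rewrite ptm; lra.
- exists (x - p + 1); split; first by rewrite ler_norml; apply/andP; split; lra.
  rewrite ptp; lra.
- exists (x - p); split; first by rewrite ler_norml; apply/andP; split; lra.
  rewrite pt0; lra.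
Qed.
Lemma s2 (x y p : R) : (x - p + 1 < y - p + 1) = (x < y).
Proof. by rewrite !ltrD2r. Qed.
Lemma s1 (x y p : R) : (x - p < y - p) = (x < y).
Proof. by rewrite !ltrD2r. Qed.
Lemma s3 (x y p : R) : 0 <= y -> x < 1 -> (x - p < y - p + 1) = true.
Proof. move=> ? ?; apply/idP; lra. Qed.
Lemma s4 (x y p : R) : 0 <= x -> y < 1 -> (x - p + 1 < y - p) = false.
Proof. move=> ? ?; apply/negbTE/negP; lra. Qed.

Lemma rot (p s t q : R) : on_circle p -> on_circle s -> on_circle t -> on_circle q ->
  in_arc (s, t) q = in_arc (pt (s - p), pt (t - p)) (pt (q - p)).
Proof.
move=> hp hs ht hq; rewrite !rE //.
move: hp hs ht hq => [? ?] [? ?] [? ?] [? ?] /=.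
case: (leP p s) => ?; case: (leP p t) => ?; case: (leP p q) => ?;
  rewrite ?s2 ?s3 ?s4 ?s1 //; cmp => //=; lra.
Qed.

Lemma arc_pair (a : R * R) q : in_arc a q = in_arc (a.1, a.2) q.
Proof. by case: a. Qed.
Lemma arc_wrap (a b c : R) : b <= a -> in_arc (a, b) c = (a < c) || (c < b).
Proof. by move=> h; rewrite /= ltNge h. Qed.
Lemma arc_lin (a b c : R) : a < b -> in_arc (a, b) c = (a < c) && (c < b).
Proof. by move=> h; rewrite /= h. Qed.
End S.
Arguments rot {R p s t q}.
Arguments endp {R p eps x}.
From mathcomp Require Import zify.

Theorem lemma3 (R : realType) (n : nat) (A : nat -> R * R) (p : R)
  (Hn : (3 <= n)%N)
  (Hpts : forall i, (i < n)%N -> on_circle (A i).1 /\ on_circle (A i).2)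
  (Hnondeg : forall i, (i < n)%N -> (A i).1 <> (A i).2)
  (Hcover : forall i j k, (i < n)%N -> (j < n)%N -> (k < n)%N ->
     exists q, on_circle q /\
       ~ (in_arc (A i) q \/ in_arc (A j) q \/ in_arc (A k) q))
  (Hp : on_circle p)
  (Hmax : forall q, on_circle q -> (ply n A q <= ply n A p)%N)
  (Hp3 : ply n A p = 3%N)
  (HAp : forall i, (i < n)%N -> (in_arc (A i) p <-> (i < 3)%N))
  (eps : R) (Heps : 0 < eps)
  (Hend : forall i, (i < n)%N ->
     ~ in_closed_nbhd p eps (A i).1 /\ ~ in_closed_nbhd p eps (A i).2) :
  let B := split_model n A p eps in
  let m := (n + 3)%N in
  is_triangle m B 0 1 2 /\ is_triangle m B n n.+1 n.+2 /\
  (forall i j, (i < 3)%N -> (j < 3)%N -> i <> (n + j)%N) /\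
  (forall i j, (i < 3)%N -> (j < 3)%N -> ~ ig_edge m B i (n + j)%N).
Proof.
move=> B m.
pose a i := pt ((A i).1 - p); pose b i := pt ((A i).2 - p).
have h3 i : (i < 3)%N -> (i < n)%N by move=> ?; lia.
have hab i : (i < n)%N -> (eps < a i < 1 - eps) /\ (eps < b i < 1 - eps).
  move=> hi; have [h1 h2] := Hend i hi; have [c1 c2] := Hpts i hi.
  have [? ?] := endp Hp c1 h1; have [? ?] := endp Hp c2 h2.
  by split; apply/andP; split.
have heps : eps < 1.
  have [/andP[? ?] _] := hab 0%N (h3 0%N isT); lra.
have hepsI : 0 < eps < 1 by apply/andP; split.
have hpp : pt (p - p) = 0 by rewrite subrr pt0.
have hba i : (i < 3)%N -> b i <= a i.
  move=> hi; have := (HAp i (h3 i hi)).2 hi.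
  have [c1 c2] := Hpts i (h3 i hi).
  rewrite arc_pair (rot Hp) // hpp /= -/(a i) -/(b i).
  have [/andP[? ?] /andP[? ?]] := hab i (h3 i hi).
  case: (ltP (a i) (b i)) => // h /andP[]; lra.
have BL i : (i < 3)%N -> B i = ((A i).1, pt (p - eps)).
  by move=> hi; rewrite /B /split_model hi.
have BR i : (i < 3)%N -> B (n + i)%N = (pt (p + eps), (A i).2).
  move=> hi; rewrite /B /split_model.
  have -> : (n + i < 3)%N = false by apply/negbTE; rewrite -leqNgt; lia.
  have -> : (n + i < n)%N = false by apply/negbTE; rewrite -leqNgt; lia.
  by rewrite addKn.
have inL i q : (i < 3)%N -> on_circle q ->
    in_arc (B i) q = (a i < pt (q - p)) && (pt (q - p) < 1 - eps).
  move=> hi hq; have [c1 c2] := Hpts i (h3 i hi).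
  rewrite BL // (rot Hp) // ?rm //; last exact: ptc.
  have [/andP[? ?] _] := hab i (h3 i hi).
  by rewrite arc_lin //; lra.
have inR i q : (i < 3)%N -> on_circle q ->
    in_arc (B (n + i)%N) q = (eps < pt (q - p)) && (pt (q - p) < b i).
  move=> hi hq; have [c1 c2] := Hpts i (h3 i hi).
  rewrite BR // (rot Hp) // ?rp //; last exact: ptc.
  have [_ /andP[? ?]] := hab i (h3 i hi).
  by rewrite arc_lin //; lra.
have edgeL i j : (i < 3)%N -> (j < 3)%N -> i <> j -> ig_edge m B i j.
  move=> hi hj hij; split; first lia; split; first lia; split => //.
  have [/andP[? ?] _] := hab i (h3 i hi); have [/andP[? ?] _] := hab j (h3 j hj).
  have [c [hc [/andP[? ?] /andP[? ?]]]] : exists c : R, on_circle c /\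
      (a i < c < 1 - eps) /\ (a j < c < 1 - eps).
    case: (leP (a i) (a j)) => h; [exists ((a j + 1 - eps) / 2) | exists ((a i + 1 - eps) / 2)];
      (split; [split; lra | split; apply/andP; split; lra]).
  exists (pt (c + p)); split; first exact: ptc.
  by rewrite !inL ?rinv //; try exact: ptc; split; apply/andP; split.
have edgeR i j : (i < 3)%N -> (j < 3)%N -> i <> j -> ig_edge m B (n + i) (n + j).
  move=> hi hj hij; split; first lia; split; first lia; split; first lia.
  have [_ /andP[? ?]] := hab i (h3 i hi); have [_ /andP[? ?]] := hab j (h3 j hj).
  have [c [hc [/andP[? ?] /andP[? ?]]]] : exists c : R, on_circle c /\
      (eps < c < b i) /\ (eps < c < b j).
    case: (leP (b i) (b j)) => h; [exists ((b i + eps) / 2) | exists ((b j + eps) / 2)];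
      (split; [split; lra | split; apply/andP; split; lra]).
  exists (pt (c + p)); split; first exact: ptc.
  by rewrite !inR ?rinv //; try exact: ptc; split; apply/andP; split.
split; first by split; [|split]; apply: edgeL.
split.
  have e01 := edgeR 0%N 1%N isT isT ltac:(done).
  have e12 := edgeR 1%N 2%N isT isT ltac:(done).
  have e02 := edgeR 0%N 2%N isT isT ltac:(done).
  rewrite addn0 in e01 e02; rewrite !addn1 in e01 e12; rewrite !addn2 in e12 e02.
  by split; [|split].
split; first by move=> i j hi hj; lia.
move=> i j hi hj [_ [_ [_ [q [hq [h1 h2]]]]]].
rewrite inL // in h1; rewrite inR // in h2.
move: h1 h2 => /andP[? ?] /andP[? ?].
have [q0 [hq0 hn0]] := Hcover i j j (h3 i hi) (h3 j hj) (h3 j hj).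
apply: hn0.
have [c1 c2] := Hpts i (h3 i hi); have [d1 d2] := Hpts j (h3 j hj).
have hbi := hba i hi; have hbj := hba j hj.
rewrite (arc_pair (A i)) (arc_pair (A j)) (rot Hp c1 c2 hq0) (rot Hp d1 d2 hq0) -/(a i) -/(b i) -/(a j) -/(b j) !arc_wrap //.
case: (ltP (a i) (pt (q0 - p))) => ?; first by left.
right; left; apply/orP; right; lra.
Qed.
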